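(* Let $r\ge2$ and let $0^r$ denote the consecutive pattern consisting of $r$ zeros. Then $|\mathbf{I}_n(0^r)|=n!$ for $1\le n<r$, and for $n\ge r$, $$|\mathbf{I}_n(0^r)|=\sum_{j=1}^{r-1}(n-j)\,|\mathbf{I}_{n-j}(0^r)|.$$
   Context: An inversion sequence of length $n$ is an integer sequence $e=e_1\dots e_n$ with $0\le e_i<i$ for all $i$; $\mathbf{I}_n$ denotes the set of these. $e$ avoids the consecutive pattern $0^r$ if there is no $i$ with $e_i=e_{i+1}=\dots=e_{i+r-1}$; $\mathbf{I}_n(0^r)$ is the set of $e\in\mathbf{I}_n$ avoiding $0^r$. *)

(* Defs.v *)
From mathcomp Require Import all_boot.
Set Implicit Arguments. Unset Strict Implicit. Unset Printing Implicit Defensive.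

(* An inversion sequence of length n, stored 0-indexed: e = e_1 ... e_n with
   e_{i+1} = nth 0 e i, and the condition 0 <= e_{i+1} < i+1. *)
Definition is_inv_seq (e : seq nat) : bool :=
  all (fun i => nth 0 e i < i.+1) (iota 0 (size e)).

Definition contains_0r (r : nat) (e : seq nat) : bool :=
  has (fun i => (i + r <= size e) &&
                all (fun k => nth 0 e (i + k) == nth 0 e i) (iota 0 r))
      (iota 0 (size e)).

Definition avoids_0r (r : nat) (e : seq nat) : bool := ~~ contains_0r r e.

(* I_n(0^r) as a finite set of n-tuples over 'I_n (each entry e_i < i <= n). *)
Definition Inv_avoid (n r : nat) : {set n.-tuple 'I_n} :=
  [set e : n.-tuple 'I_n |
     is_inv_seq (map val (val e)) && avoids_0r r (map val (val e))].

(* Main.v *)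
Require Import Defs.
From mathcomp Require Import all_boot zify.

Lemma is_inv_rcons e x : is_inv_seq (rcons e x) = is_inv_seq e && (x < (size e).+1).
Proof.
rewrite /is_inv_seq size_rcons -addn1 iotaD add0n cats1 all_rcons nth_rcons ltnn eqxx andbC.
congr (_ && _); last by rewrite addn1.
apply: eq_in_all => i; rewrite mem_iota /= => hi.
by rewrite nth_rcons hi.
Qed.

Lemma contains_ex r e : 0 < r ->
  reflect (exists s1 v s2, e = s1 ++ nseq r v ++ s2) (contains_0r r e).
Proof.
move=> r0; apply: (iffP hasP).
- move=> [i _ /andP[hir /allP hk]].
  exists (take i e), (nth 0 e i), (drop (i + r) e).
  rewrite -{1}(cat_take_drop i e); congr (_ ++ _).
  rewrite -{1}(cat_take_drop r (drop i e)) drop_drop addnC; congr (_ ++ _).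
  apply: (@eq_from_nth _ 0).
    rewrite size_take size_drop size_nseq.
    have h : r <= size e - i by lia.
    by case: ltnP => // h2; apply/eqP; rewrite eqn_leq h h2.
  move=> k; rewrite size_take size_drop => hk'.
  have hkr : k < r.
    by move: hk'; case: ifP => // /negbT; rewrite -leqNgt => h1 h2; lia.
  rewrite nth_take // nth_drop nth_nseq hkr; apply/eqP/hk; rewrite mem_iota //.
- move=> [s1 [v [s2 ->]]]; exists (size s1).
    by rewrite mem_iota /= !size_cat size_nseq; lia.
  rewrite !size_cat size_nseq addnA leq_addr /=; apply/allP => k.
  rewrite mem_iota /= => hk.
  rewrite (nth_cat 0 s1) ltnNge leq_addr /= addKn (nth_cat 0 s1) ltnn subnn.
  by rewrite !(nth_cat 0 (nseq r v)) size_nseq hk r0 !nth_nseq hk r0.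
Qed.

Fixpoint trc (x : nat) (s : seq nat) : nat :=
  if s is y :: s' then (if y == x then (trc x s').+1 else 0) else 0.
Definition tr x e := trc x (rev e).
Definition lastrun e := tr (last 0 e) e.

Lemma tr_nil x : tr x [::] = 0. Proof. by []. Qed.
Lemma tr_rcons x e y : tr x (rcons e y) = if y == x then (tr x e).+1 else 0.
Proof. by rewrite /tr rev_rcons. Qed.

Lemma tr_dec x e : exists s, e = s ++ nseq (tr x e) x.
Proof.
elim/last_ind: e => [|e y [s hs]]; first by exists [::].
rewrite tr_rcons; case: (y =P x) => [->|_]; last by exists (rcons e y); rewrite cats0.
exists s; rewrite {1}hs /= -cats1 -catA; congr (_ ++ _).
by elim: (tr x e) => //= n ->.
Qed.

Lemma tr_ge x s k : k <= tr x (s ++ nseq k x).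
Proof.
elim: k => // k IH.
have -> : s ++ nseq k.+1 x = rcons (s ++ nseq k x) x.
  rewrite -cats1 -catA; congr (_ ++ _); by elim: k {IH} => //= k ->.
by rewrite tr_rcons eqxx ltnS.
Qed.

Lemma last_nseq_pos (d v : nat) r : 0 < r -> last d (nseq r v) = v.
Proof. by case: r => //= r _; elim: r => //= r. Qed.

Lemma contains_rcons r e x : 0 < r ->
  contains_0r r (rcons e x) = contains_0r r e || (r <= tr x (rcons e x)).
Proof.
move=> r0; apply/(contains_ex _ _ r0)/idP.
- move=> [s1 [v [s2 he]]]; case/lastP: s2 he => [|s2 y] he.
  + have hv : v = x.
      have := congr1 (last 0) he; rewrite last_rcons cats0 last_cat.
      by rewrite last_nseq_pos.
    by rewrite he cats0 hv tr_ge orbT.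
  + move: he; rewrite -!rcons_cat => /rcons_inj [he _].
    by apply/orP; left; apply/(contains_ex _ _ r0); exists s1, v, s2.
- case/orP.
  + move/(contains_ex _ _ r0) => [s1 [v [s2 ->]]].
    by exists s1, v, (rcons s2 x); rewrite -!rcons_cat.
  + have [s hs] := tr_dec x (rcons e x); move=> hle.
    exists (s ++ nseq (tr x (rcons e x) - r) x), x, [::].
    by rewrite {1}hs cats0 -catA -nseqD subnK.
Qed.

Lemma lastrun_rcons e x : lastrun (rcons e x) = (tr x e).+1.
Proof. by rewrite /lastrun last_rcons tr_rcons eqxx. Qed.

Lemma trE x e : tr x e = if x == last 0 e then lastrun e else 0.
Proof.
case/lastP: e => [|e y]; first by case: eqP.
rewrite /lastrun last_rcons !tr_rcons eqxx eq_sym; by case: eqP => // ->.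
Qed.

Lemma lastrun_pos e : e != [::] -> 0 < lastrun e.
Proof. by case/lastP: e => // e y _; rewrite lastrun_rcons. Qed.

Lemma avoid_lastrun r e : 0 < r -> avoids_0r r e -> lastrun e < r.
Proof.
move=> r0; case/lastP: e => [|e y]; first by rewrite /lastrun.
by rewrite /avoids_0r contains_rcons // negb_or -ltnNge /lastrun last_rcons => /andP[].
Qed.

Fixpoint invseq (n : nat) : seq (seq nat) :=
  if n is m.+1 then [seq rcons e x | e <- invseq m, x <- iota 0 m.+1] else [:: [::]].

Lemma mem_inv n e : (e \in invseq n) = (size e == n) && is_inv_seq e.
Proof.
elim: n e => [|n IH] e.
  by case: e => //=; rewrite inE.
apply/allpairsP/idP.
- move=> [[e' x] /= [he' hx ->]].
  move: he'; rewrite IH => /andP[/eqP hs hi].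
  rewrite size_rcons hs eqxx is_inv_rcons hi hs /=.
  by move: hx; change (0 :: iota 1 n) with (iota 0 n.+1); rewrite mem_iota.
- case/lastP: e => [|e x]; first by [].
  rewrite size_rcons eqSS is_inv_rcons => /andP[/eqP hs /andP[hi hx]].
  exists (e, x); split; first by rewrite IH hs eqxx.
    by rewrite mem_iota /= -hs.
  by [].
Qed.

Lemma uniq_inv n : uniq (invseq n).
Proof.
elim: n => // n IH.
change (uniq [seq rcons e x | e <- invseq n, x <- iota 0 n.+1]); apply: allpairs_uniq => //; first exact: iota_uniq.
by move=> [e x] [e' x'] _ _ /= /rcons_inj [-> ->].
Qed.

Lemma size_inv n : size (invseq n) = n`!.
Proof.
elim: n => // n IH.
change (size [seq rcons e x | e <- invseq n, x <- iota 0 n.+1] = n.+1`!).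
by rewrite size_allpairs IH size_iota factS mulnC. Qed.

Lemma lift_seq n (x : seq nat) : all (fun y => y < n) x ->
  exists s : seq 'I_n, map val s = x.
Proof.
elim: x => [|y x IH] /=; first by exists [::].
move=> /andP[hy /IH [s hs]]; by exists (Ordinal hy :: s); rewrite /= hs.
Qed.

Lemma card_inv n r : #|Inv_avoid n r| = count (avoids_0r r) (invseq n).
Proof.
pose f := fun t : n.-tuple 'I_n => map val (val t).
have finj : injective f.
  by move=> t1 t2 /(inj_map val_inj) /val_inj.
rewrite cardE -(size_map f) -size_filter; apply: perm_size.
apply: uniq_perm.
- by rewrite (map_inj_uniq finj) enum_uniq.
- by rewrite filter_uniq // uniq_inv.
move=> x; rewrite mem_filter mem_inv; apply/mapP/idP.
- move=> [t]; rewrite mem_enum inE => /andP[hi ha] ->.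
  by rewrite ha hi /f size_map size_tuple eqxx.
- move=> /andP[ha /andP[/eqP hs hi]].
  have hall : all (fun y => y < n) x.
    apply/(all_nthP 0) => i hin.
    move/allP: hi => /(_ i); rewrite mem_iota /= => /(_ hin) h.
    by apply: leq_trans h _; rewrite -hs.
  have [s0 hs0] := lift_seq _ _ hall.
  have hsz : size s0 == n by apply/eqP; rewrite -{2}hs -hs0 size_map.
  exists (Tuple hsz); last by rewrite /f /= hs0.
  by rewrite mem_enum inE /= hs0 hi ha.
Qed.

Definition cnt r n j := count (fun e => avoids_0r r e && (lastrun e == j)) (invseq n).

Lemma count_allpairs_const (Q P : pred (seq nat)) s t c :
  (forall e, e \in s -> count (fun x => Q (rcons e x)) t = c * P e) ->
  count Q [seq rcons e x | e <- s, x <- t] = c * count P s.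
Proof.
elim: s => [|e s IH] h; first by rewrite muln0.
rewrite allpairs_cons count_cat count_map IH; last by move=> e' he'; apply: h; rewrite inE he' orbT.
by rewrite h ?inE ?eqxx //= mulnDr.
Qed.

Lemma avoid_rcons r e x : 0 < r ->
  avoids_0r r (rcons e x) = avoids_0r r e && ((tr x e).+1 < r).
Proof. by move=> r0; rewrite /avoids_0r contains_rcons // tr_rcons eqxx negb_or -ltnNge. Qed.

Lemma last_inv e : is_inv_seq e -> last 0 e < (size e).+1.
Proof.
case/lastP: e => // e y; rewrite is_inv_rcons last_rcons size_rcons => /andP[_ h].
exact: ltnW.
Qed.

Lemma count_b_eq (b : bool) v (t : seq nat) :
  count (fun x => b && (x == v)) t = b * count_mem v t.
Proof. by case: b; rewrite ?mul1n ?mul0n //= count_pred0. Qed.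

Lemma count_b_neq (b : bool) v (t : seq nat) :
  count (fun x => b && (x != v)) t = b * (size t - count_mem v t).
Proof.
case: b; rewrite ?mul1n ?mul0n //= ?count_pred0 //.
by rewrite -(count_predC (pred1 v) t) addKn.
Qed.

Lemma cnt1 r n : 1 < r -> 1 <= n -> cnt r n.+1 1 = n * count (avoids_0r r) (invseq n).
Proof.
move=> r1 n1; rewrite /cnt; apply: count_allpairs_const => e.
rewrite mem_inv => /andP[/eqP hs hi].
have hne : e != [::] by apply/eqP => he; move: hs; rewrite he /= => h; rewrite -h in n1.
have hlp := lastrun_pos _ hne.
have hv := last_inv _ hi; rewrite hs in hv.
rewrite (eq_count (a2 := fun x => avoids_0r r e && (x != last 0 e))); last first.
  move=> x /=; rewrite avoid_rcons ?(ltnW r1) // lastrun_rcons eqSS trE.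
  case: eqP => _ /=.
    by move: hlp; rewrite lt0n => /negbTE ->; rewrite !andbF.
  by rewrite r1 !andbT.
rewrite (count_b_neq (avoids_0r r e) (last 0 e) (iota 0 n.+1)) count_uniq_mem ?iota_uniq // mem_iota /= hv size_iota subn1 /=.
by rewrite mulnC.
Qed.

Lemma cntS r n j : 1 <= j -> j.+1 < r -> cnt r n.+1 j.+1 = cnt r n j.
Proof.
move=> j1 jr; rewrite /cnt -[count _ (invseq n)]mul1n; apply: count_allpairs_const => e.
rewrite mem_inv => /andP[/eqP hs hi].
have hv := last_inv _ hi; rewrite hs in hv.
rewrite (eq_count (a2 := fun x => (avoids_0r r e && (lastrun e == j)) && (x == last 0 e))); last first.
  have r0 : 0 < r by lia.
  move=> x /=; rewrite (avoid_rcons _ _ _ r0) lastrun_rcons eqSS trE.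
  case: eqP => _ /=.
    by case: eqP => [->|]; rewrite ?jr ?andbT ?andbF.
  have -> : (0 == j) = false by apply/negbTE; rewrite eq_sym -lt0n.
  by rewrite !andbF.
by rewrite (count_b_eq (avoids_0r r e && (lastrun e == j)) (last 0 e) (iota 0 n.+1)) count_uniq_mem ?iota_uniq // mem_iota /= hv mulnC.
Qed.

Lemma sum_bool_count (s : seq nat) (a : pred nat) : \sum_(x <- s) a x = count a s.
Proof. by elim: s => [|x s IH]; rewrite ?big_nil ?big_cons ?IH. Qed.

Lemma count_split r s : 0 < r -> all (fun e => e != [::]) s ->
  count (avoids_0r r) s = \sum_(1 <= j < r) count (fun e => avoids_0r r e && (lastrun e == j)) s.
Proof.
move=> r0; elim: s => [|e s IH] /=; first by rewrite big1.
move=> /andP[hne hall]; rewrite IH // big_split /=; congr (_ + _).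
case ha: (avoids_0r r e) => /=; last by rewrite big1.
rewrite /index_iota (sum_bool_count _ (fun i => lastrun e == i)).
rewrite (eq_count (a2 := pred1 (lastrun e))); last by move=> i /=; rewrite eq_sym.
rewrite count_uniq_mem ?iota_uniq // mem_iota.
by rewrite lastrun_pos //= subnKC ?avoid_lastrun // ltnW.
Qed.

Lemma short_avoid r e : size e < r -> avoids_0r r e.
Proof. move=> h; apply/hasP => [[i _ /andP[h2 _]]]; lia. Qed.

Lemma cnt_shift r j : 1 <= j -> j < r -> forall n, j <= n -> cnt r n j = cnt r (n - j).+1 1.
Proof.
elim: j => // j IH _ jr n jn.
case: j IH jr jn => [|j] IH jr jn; first by rewrite subn1 prednK.
case: n jn => // n jn.
by rewrite cntS // IH // ltnW.
Qed.

Theorem mainTheorem8 (r : nat) (hr : 2 <= r) :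
  (forall n : nat, 1 <= n -> n < r -> #|Inv_avoid n r| = n`!) /\
  (forall n : nat, r <= n ->
     #|Inv_avoid n r| = \sum_(1 <= j < r) (n - j) * #|Inv_avoid (n - j) r|).
Proof.
split.
- move=> n _ nr; rewrite card_inv -size_inv -count_predT; apply: eq_in_count => e.
  by rewrite mem_inv => /andP[/eqP hs _]; rewrite short_avoid // hs.
- move=> n rn; rewrite card_inv count_split; last 2 first.
  + lia.
  + apply/allP => e; rewrite mem_inv => /andP[/eqP hs _]; apply/eqP => he.
    by move: hs; rewrite he /= => hs; lia.
  apply: eq_big_nat => j /andP[j1 jr].
  by rewrite -/(cnt r n j) cnt_shift //; [rewrite cnt1 ?card_inv //; lia | lia].
Qed.
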